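(* Let $n\ge K\ge 1$ and $L\ge 1$ be integers and $\rho\in(0,1]$. Let $\Pi_r,\Pi_c\in[0,1]^{n\times K}$ be matrices whose rows each have $\ell_1$-norm $1$, and suppose there are index sets $\mathcal{I}_r,\mathcal{I}_c\subseteq[n]$ of size $K$ with $\Pi_r(\mathcal{I}_r,:)=I_{K\times K}$ and $\Pi_c(\mathcal{I}_c,:)=I_{K\times K}$. Let $B_1,\dots,B_L\in[0,1]^{K\times K}$, set $\Omega_l=\rho\,\Pi_r B_l\Pi_c'$ for $l\in[L]$, and define $\tilde S_r=\sum_{l\in[L]}\Omega_l\Omega_l'$ and $\tilde S_c=\sum_{l\in[L]}\Omega_l'\Omega_l$. Suppose that $\mathrm{rank}(\sum_{l\in[L]}B_lB_l')=K$ and $\mathrm{rank}(\sum_{l\in[L]}B_l'B_l)=K$. Then: (i) if $U_r\in\mathbb{R}^{n\times K}$ is a matrix whose columns are eigenvectors of $\tilde S_r$ associated with its $K$ largest eigenvalues in absolute value, with $U_r'U_r=I_{K\times K}$, then $U_r=\Pi_r U_r(\mathcal{I}_r,:)$; (ii) if $U_c\in\mathbb{R}^{n\times K}$ is a matrix whose columns are eigenvectors of $\tilde S_c$ associated with its $K$ largest eigenvalues in absolute value, with $U_c'U_c=I_{K\times K}$, then $U_c=\Pi_c U_c(\mathcal{I}_c,:)$.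
   Context: For a matrix $M$ and index set $S$, $M(S,:)$ denotes the submatrix formed by the rows of $M$ indexed by $S$ (in the order of $S$); $M'$ is the transpose; $[q]=\{1,\dots,q\}$. This is the population setting of the multi-layer mixed membership stochastic co-block model, where $\Pi_r$ and $\Pi_c$ are the row (sending) and column (receiving) membership matrices and $\mathcal{I}_r,\mathcal{I}_c$ index pure nodes. *)

(* Defs.v *)
From HB Require Import structures.
From mathcomp Require Import all_boot all_order all_algebra.
Set Implicit Arguments. Unset Strict Implicit. Unset Printing Implicit Defensive.
Import Order.TTheory GRing.Theory Num.Theory.
Local Open Scope ring_scope.

Definition membership_mx (R : realFieldType) (n K : nat) (P : 'M[R]_(n, K)) :=
  (forall i j, 0 <= P i j <= 1) /\ (forall i, \sum_(j < K) P i j = 1).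

Definition unit_entries (R : realFieldType) (m p : nat) (B : 'M[R]_(m, p)) :=
  forall i j, 0 <= B i j <= 1.

(* U : n x K consists of eigenvectors of the (symmetric) matrix S associated
   with its K largest eigenvalues in absolute value: U is formed by K columns
   (selected by the injection g) of an orthonormal eigenbasis V of S
   (S V = V diag(d)), and every eigenvalue d j attached to a column of V not
   selected is at most, in absolute value, every selected eigenvalue. *)
Definition top_abs_eigvecs (R : realFieldType) (n K : nat)
    (S : 'M[R]_n) (U : 'M[R]_(n, K)) :=
  exists (V : 'M[R]_n) (d : 'rV[R]_n) (g : 'I_K -> 'I_n),
    [/\ V^T *m V = 1%:M, S *m V = V *m diag_mx d, injective g,
        U = colsub g V &
        forall (k : 'I_K) (j : 'I_n), j \notin codom g ->
          `|d 0 j| <= `|d 0 (g k)|].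

(* Main.v *)
Require Import Defs.
From HB Require Import structures.
From mathcomp Require Import all_boot all_order all_algebra.
Set Implicit Arguments. Unset Strict Implicit. Unset Printing Implicit Defensive.
Import Order.TTheory GRing.Theory Num.Theory.
Local Open Scope ring_scope.

Lemma yyT0 (R : realFieldType) m (y : 'rV[R]_m) :
  0 <= (y *m y^T) 0 0 /\ ((y *m y^T) 0 0 = 0 -> y = 0).
Proof.
have E : (y *m y^T) 0 0 = \sum_i y 0 i ^+ 2.
  by rewrite !mxE; apply: eq_bigr => i _; rewrite mxE expr2.
rewrite E; split; first by apply: sumr_ge0 => i _; exact: sqr_ge0.
move=> H; apply/matrixP => i j; rewrite (ord1 i) mxE.
have := @psumr_eq0P _ _ _ _ (fun k _ => sqr_ge0 (y 0 k)) H j isT.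
by move/eqP; rewrite sqrf_eq0 => /eqP.
Qed.

Lemma kerM (R : realFieldType) (n K L : nat) (Q : 'M[R]_(n, K)) (J : 'I_K -> 'I_n)
   (C : 'I_L -> 'M[R]_K) (x : 'rV[R]_K) :
  rowsub J Q = 1%:M -> \rank (\sum_(l < L) C l *m (C l)^T)%R = K ->
  x *m (\sum_(l < L) C l *m (Q^T *m Q) *m (C l)^T) = 0 -> x = 0.
Proof.
move=> HJ Hr Hx.
pose y l := x *m C l *m Q^T.
have E : (x *m (\sum_(l < L) C l *m (Q^T *m Q) *m (C l)^T) *m x^T) 0 0
   = \sum_l (y l *m (y l)^T) 0 0.
  rewrite mulmx_sumr mulmx_suml summxE; apply: eq_bigr => l _.
  by rewrite /y !trmx_mul trmxK !mulmxA.
rewrite Hx mul0mx mxE in E.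
have Hy : forall l, y l = 0.
  move=> l; apply: (proj2 (yyT0 (y l))).
  exact: (@psumr_eq0P _ _ _ _ (fun k _ => proj1 (yyT0 (y k))) (esym E) l isT).
have HQ : Q^T *m (rowsub J 1%:M)^T = 1%:M.
  by rewrite -trmx_mul -rowsubE HJ trmx1.
have Hc : forall l, x *m C l = 0.
  move=> l; rewrite -[x *m C l]mulmx1 -HQ mulmxA; have := Hy l; rewrite /y => ->; by rewrite mul0mx.
have Hs : x *m (\sum_(l < L) C l *m (C l)^T) = 0.
  by rewrite mulmx_sumr big1 // => l _; rewrite mulmxA Hc mul0mx.
have : (x <= kermx (\sum_(l < L) C l *m (C l)^T)%R)%MS by apply/sub_kermxP.
move/mxrankS; rewrite mxrank_ker Hr subnn leqn0 mxrank_eq0 => /eqP //.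
Qed.

Lemma rank_diag_le (R : fieldType) n (d : 'rV[R]_n) :
  (\rank (diag_mx d) <= #|[pred j | d ord0 j != 0%R]|)%N.
Proof.
rewrite diag_mx_sum_delta.
apply: (@leq_trans (\sum_i \rank (d ord0 i *: (delta_mx i i : 'M[R]_n))%R)%N).
  elim/big_ind2: _ => //; first by rewrite mxrank0.
  move=> A a B b HA HB; apply: leq_trans (mxrank_add _ _) _; exact: leq_add.
rewrite -sum1_card [X in (_ <= X)%N]big_mkcond /=; apply: leq_sum => i _; rewrite inE.
case: eqP => [->|_]; first by rewrite scale0r mxrank0.
by apply: leq_trans (mxrank_scale _ _) _; rewrite mxrank_delta.
Qed.

Lemma key (R : realFieldType) (n K L : nat) (P Q : 'M[R]_(n, K)) (I J : 'I_K -> 'I_n)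
   (C : 'I_L -> 'M[R]_K) (rho : R) (U : 'M[R]_(n, K)) :
  (1 <= K)%N -> rho != 0 -> rowsub I P = 1%:M -> rowsub J Q = 1%:M ->
  \rank (\sum_(l < L) C l *m (C l)^T)%R = K ->
  top_abs_eigvecs (\sum_(l < L) (rho *: (P *m C l *m Q^T)) *m (rho *: (P *m C l *m Q^T))^T) U ->
  U = P *m rowsub I U.
Proof.
move=> K1 rho0 HI HJ Hr.
set S := \sum_(l < L) _.
pose M := \sum_(l < L) C l *m (Q^T *m Q) *m (C l)^T.
have HS : S = P *m ((rho * rho) *: M) *m P^T.
  rewrite /S /M scaler_sumr mulmx_sumr mulmx_suml; apply: eq_bigr => l _.
  rewrite linearZ /= -scalemxAr -scalemxAl scalerA -scalemxAr -scalemxAl; congr (_ *: _).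
  by rewrite !trmx_mul trmxK !mulmxA.
have rM : \rank M = K.
  apply/eqP; rewrite -[_ == _]/(row_free M) -kermx_eq0; apply/eqP/row_matrixP => i.
  rewrite row0; apply: (kerM HJ Hr).
  by rewrite -row_mul mulmx_ker row0.
have rS : (K <= \rank S)%N.
  pose E : 'M[R]_(K, n) := rowsub I 1%:M.
  have EP : E *m P = 1%:M by rewrite /E -rowsubE.
  have : E *m S *m E^T = (rho * rho) *: M.
    by rewrite HS !mulmxA EP mul1mx -mulmxA -trmx_mul EP trmx1 mulmx1.
  move=> H; rewrite -{1}rM -(mxrank_scale_nz M (mulf_neq0 rho0 rho0)) -H.
  by apply: leq_trans (mxrankM_maxl _ _) _; apply: mxrankM_maxr.
case=> V [d [g [HV HSV Hg HU Hmax]]].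
have HVV : V *m V^T = 1%:M by apply: mulmx1C.
have nz : forall k, d 0 (g k) != 0.
  move=> k0; apply/negP => /eqP H0.
  have Hsub : [pred j | d ord0 j != 0%R] \subset g @: [set~ k0].
    apply/subsetP => j; rewrite inE => Hj.
    case: (boolP (j \in codom g)) => [/codomP [k Ek]|Hc].
      rewrite Ek; apply: imset_f; rewrite !inE; apply/eqP => Ekk.
      by move: Hj; rewrite Ek Ekk H0 eqxx.
    have := Hmax k0 j Hc; rewrite H0 normr0 normr_le0 => Hd.
    by move: Hj; rewrite Hd.
  have : (\rank S <= K.-1)%N.
    have -> : S = S *m V *m V^T by rewrite -mulmxA HVV mulmx1.
    apply: leq_trans (mxrankM_maxl _ _) _; rewrite HSV.
    apply: leq_trans (mxrankM_maxr _ _) _.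
    apply: leq_trans (rank_diag_le d) _.
    apply: leq_trans (subset_leq_card Hsub) _.
    apply: leq_trans (leq_imset_card _ _) _.
    by rewrite cardsC1 card_ord.
  move=> H; have := leq_trans rS H; move: K1; clear; case: K => // k _; by rewrite ltnn.
have SU : S *m U = U *m diag_mx (\row_k d 0 (g k)).
  rewrite HU mulmx_colsub HSV; apply/matrixP => i k.
  by rewrite mul_mx_diag (mul_mx_diag (colsub g V)) !mxE.
have UE : U = S *m U *m diag_mx (\row_k (d 0 (g k))^-1).
  rewrite SU -mulmxA mulmx_diag; apply/matrixP => i k.
  by rewrite mul_mx_diag !mxE mulfV ?mulr1.
set Y := (rho * rho) *: M *m P^T *m U *m diag_mx (\row_k (d 0 (g k))^-1).
have UY : U = P *m Y by rewrite /Y {1}UE HS !mulmxA.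
by rewrite {2}UY -mul_rowsub_mx HI mul1mx.
Qed.

Theorem lemma1 (R : realFieldType) (n K L : nat) (rho : R)
    (Pr Pc : 'M[R]_(n, K)) (Ir Ic : 'I_K -> 'I_n) (B : 'I_L -> 'M[R]_K) :
  (1 <= K)%N -> (K <= n)%N -> (1 <= L)%N ->
  0 < rho -> rho <= 1 ->
  membership_mx Pr -> membership_mx Pc ->
  injective Ir -> injective Ic ->
  rowsub Ir Pr = 1%:M -> rowsub Ic Pc = 1%:M ->
  (forall l, unit_entries (B l)) ->
  \rank (\sum_(l < L) B l *m (B l)^T)%R = K ->
  \rank (\sum_(l < L) (B l)^T *m B l)%R = K ->
  let Omega := fun l : 'I_L => rho *: (Pr *m B l *m Pc^T) in
  let Sr := \sum_(l < L) Omega l *m (Omega l)^T in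
  let Sc := \sum_(l < L) (Omega l)^T *m Omega l in
  (forall Ur : 'M[R]_(n, K),
     top_abs_eigvecs Sr Ur -> Ur^T *m Ur = 1%:M -> Ur = Pr *m rowsub Ir Ur) /\
  (forall Uc : 'M[R]_(n, K),
     top_abs_eigvecs Sc Uc -> Uc^T *m Uc = 1%:M -> Uc = Pc *m rowsub Ic Uc).
Proof.
move=> K1 _ _ rho0 _ _ _ _ _ HI HJ _ H1 H2 Omega Sr Sc.
have rnz : rho != 0 by rewrite gt_eqF.
split.
  move=> U HU _; exact: (key K1 rnz HI HJ H1 HU).
move=> U HU _.
have E : Sc = \sum_(l < L) (rho *: (Pc *m (B l)^T *m Pr^T)) *m (rho *: (Pc *m (B l)^T *m Pr^T))^T.
  rewrite /Sc; apply: eq_bigr => l _.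
  have -> : (rho *: (Pc *m (B l)^T *m Pr^T)) = (Omega l)^T.
    have trZ : forall (a : R) (X : 'M[R]_n), (a *: X)^T = a *: X^T.
      by move=> a X; apply/matrixP => i j; rewrite !mxE.
    by rewrite /Omega trZ !trmx_mul trmxK mulmxA.
  by rewrite trmxK.
have H2' : \rank (\sum_(l < L) (B l)^T *m ((B l)^T)^T)%R = K.
  have -> : (\sum_(l < L) (B l)^T *m ((B l)^T)^T)%R = (\sum_(l < L) (B l)^T *m B l)%R.
    by apply: eq_bigr => l _; rewrite trmxK.
  exact: H2.
rewrite E in HU.
exact: (key K1 rnz HJ HI H2' HU).
Qed.
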